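(* For all integers $k\ge 1$ and $j\ge 1$, setting $m=\binom{kj-1}{(k-1)j}$, the complete $k$-partite graph $K_{m*k}$ is not $(k-1)j$-choosable; that is, $\mathrm{ch}(K_{m*k})\ge (k-1)j+1$.
   Context: A list assignment $L$ for a graph $G$ assigns to each vertex $v$ a set $L(v)$ of colors. An $L$-coloring is a proper coloring $f$ of $G$ with $f(v)\in L(v)$ for all $v$. $G$ is $r$-choosable if it has an $L$-coloring for every list assignment $L$ with $|L(v)|\ge r$ for all $v$; the choice number $\mathrm{ch}(G)$ is the least such $r$. $K_{m*k}$ denotes the complete multipartite graph with $k$ parts of size $m$. *)

(* Defs.v *)
From mathcomp Require Import all_boot.
Set Implicit Arguments. Unset Strict Implicit. Unset Printing Implicit Defensive.

(* A list assignment assigns to each vertex a list of colours (natural numbers);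
   |L(v)| is the number of distinct colours, size (undup (L v)). *)
Definition list_assignment (V : finType) := V -> seq nat.

Definition L_coloring (V : finType) (adj : rel V) (L : list_assignment V)
  (f : V -> nat) : Prop :=
  (forall v, f v \in L v) /\ (forall u v, adj u v -> f u != f v).

Definition choosable (V : finType) (adj : rel V) (r : nat) : Prop :=
  forall L : list_assignment V, (forall v, r <= size (undup (L v))) ->
    exists f : V -> nat, L_coloring adj L f.

Definition Kmk_vertex (m k : nat) : finType := ('I_k * 'I_m)%type.
Definition Kmk_adj (m k : nat) : rel (Kmk_vertex m k) :=
  fun x y => x.1 != y.1.

(* Main.v *)
Require Import Defs.
From mathcomp Require Import all_boot.
From mathcomp Require Import zify.

Set Implicit Arguments. Unset Strict Implicit. Unset Printing Implicit Defensive.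

Lemma count_disj (k n j : nat) (U : 'I_k -> {set 'I_n}) :
  (forall p, j <= #|U p|) ->
  (forall c p q, c \in U p -> c \in U q -> p = q) ->
  k * j <= n.
Proof.
move=> Hj Hd.
have -> : k * j = \sum_(p < k) j by rewrite sum_nat_const card_ord.
apply: (@leq_trans (\sum_(p < k) #|U p|)); first exact: leq_sum.
have E : forall p, #|U p| = \sum_(c < n) (c \in U p : nat).
  by move=> p; rewrite -sum1_card big_mkcond.
under eq_bigr do rewrite E.
rewrite exchange_big /=.
rewrite -[n in _ <= n]card_ord -sum1_card.
apply: leq_sum => c _.
case: (pickP (fun p => c \in U p)) => [p0 Hp0|H0].
  rewrite (bigD1 p0) //= Hp0 big1 // => q Hq.
  case: (boolP (c \in U q)) => // Hc.
  by rewrite (Hd c q p0 Hc Hp0) eqxx in Hq.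
by rewrite big1 // => q _; rewrite H0.
Qed.

Theorem mainTheorem3 (k j : nat) (hk : 1 <= k) (hj : 1 <= j) :
  let m := 'C(k * j - 1, (k - 1) * j) in
  ~ choosable (@Kmk_adj m k) ((k - 1) * j).
Proof.
move=> m.
set n := k * j - 1.
set s := (k - 1) * j.
pose S := [set A : {set 'I_n} | #|A| == s].
have hS : #|S| = m by rewrite card_draws card_ord.
pose vs (i : 'I_m) : {set 'I_n} := enum_val (cast_ord (esym hS) i).
have vsS : forall i, vs i \in S by move=> i; apply: enum_valP.
have vsurj : forall A, A \in S -> exists i, vs i = A.
  move=> A AS; exists (cast_ord hS (enum_rank_in AS A)).
  by rewrite /vs cast_ordK enum_rankK_in.
pose L : list_assignment (Kmk_vertex m k) := fun v => map val (enum (vs v.2)).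
move=> Hch.
have [f [Hf1 Hf2]] : exists f, (forall v, f v \in L v) /\ (forall u v, Kmk_adj u v -> f u != f v).
  apply: Hch => v.
  rewrite undup_id; last by rewrite map_inj_uniq ?enum_uniq //; apply: val_inj.
  by rewrite size_map -cardE; move: (vsS v.2); rewrite inE => /eqP ->.
pose U (p : 'I_k) : {set 'I_n} := [set c | [exists i : 'I_m, f (p, i) == val c]].
have kj0 : 0 < k * j by rewrite muln_gt0 hk hj.
have hn : n < k * j by rewrite /n; lia.
have Hd : forall c p q, c \in U p -> c \in U q -> p = q.
  move=> c p q; rewrite !inE => /existsP [i /eqP Hi] /existsP [i' /eqP Hi'].
  apply/eqP; apply: contraT => Hpq.
  have := Hf2 (p, i) (q, i') Hpq.
  by rewrite Hi Hi' eqxx.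
have e : k * j = (k - 1) * j + j by rewrite -{1}(subnK hk) mulnDl mul1n.
have Hj : forall p, j <= #|U p|.
  move=> p; rewrite leqNgt; apply/negP => Hlt.
  have hC : s <= #|~: U p|.
    have := cardsC (U p); rewrite card_ord => H.
    have en : n + 1 = k * j by rewrite /n; lia.
    move: H Hlt e en; rewrite /s.
    move: (#|U p|) (#|~: U p|) ((k-1)*j) (k*j) => a b x y. lia.
  have : 0 < #|[set A : {set 'I_n} | A \subset ~: U p & #|A| == s]|.
    by rewrite cards_draws bin_gt0.
  case/card_gt0P => A; rewrite inE => /andP [AsubC Acard].
  have AS : A \in S by rewrite inE.
  have [i Hi] := vsurj A AS.
  have := Hf1 (p, i); rewrite /L /= Hi => /mapP [c cA Hc].
  rewrite mem_enum in cA.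
  have : c \in U p by rewrite inE; apply/existsP; exists i; rewrite Hc.
  by move/subsetP: AsubC => /(_ c cA); rewrite inE => /negP.
have := count_disj Hj Hd.
lia.
Qed.
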